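(* Let $N$ be a finitely generated torsion-free nilpotent group and let $\phi\in\mathrm{Aut}(N)$ be such that the induced automorphism of $H_1(N,\mathbb{Q})$ is unipotent. Then $K_{\phi}=1$.
   Context: For a finitely generated group $G$ with finite generating set $S$, $\ell=\ell_S$ denotes word length with respect to $S$. For $\phi\in\mathrm{Aut}(G)$, the entropy of $\phi$ is $K_{\phi}=\max_{s\in S}\lim_{n\to\infty}\ell(\phi^n(s))^{1/n}$; it is independent of $S$. A linear automorphism $A$ is unipotent if $A-I$ is nilpotent. *)

(* Defs.v *)
From Stdlib Require Import Reals List Arith.
Open Scope R_scope.

Record is_group (G : Type) (mul : G -> G -> G) (inv : G -> G) (one : G) : Prop := {
  grp_assoc : forall x y z, mul x (mul y z) = mul (mul x y) z;
  grp_mul1l : forall x, mul one x = x;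
  grp_mul1r : forall x, mul x one = x;
  grp_mulVl : forall x, mul (inv x) x = one;
  grp_mulVr : forall x, mul x (inv x) = one
}.

Section GroupNotions.
Variables (G : Type) (mul : G -> G -> G) (inv : G -> G) (one : G).

Fixpoint gpow (x : G) (n : nat) : G :=
  match n with O => one | S k => mul x (gpow x k) end.

Definition gcomm (x y : G) : G := mul (mul (inv x) (inv y)) (mul x y).

Inductive gen (P : G -> Prop) : G -> Prop :=
| gen_base : forall x, P x -> gen P x
| gen_one : gen P one
| gen_mul : forall x y, gen P x -> gen P y -> gen P (mul x y)
| gen_inv : forall x, gen P x -> gen P (inv x).

Fixpoint lcs (i : nat) : G -> Prop :=
  match i with
  | O => fun _ => True
  | S k => gen (fun z => exists x y, lcs k y /\ z = gcomm x y)
  end.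

Definition nilpotent : Prop := exists c, forall x, lcs c x -> x = one.

Definition torsion_free : Prop :=
  forall x n, (0 < n)%nat -> gpow x n = one -> x = one.

Definition generates (S : list G) : Prop := forall g, gen (fun x => In x S) g.

Definition is_automorphism (phi : G -> G) : Prop :=
  (forall x y, phi (mul x y) = mul (phi x) (phi y)) /\
  (forall x y, phi x = phi y -> x = y) /\
  (forall y, exists x, phi x = y).

(* Words over S ∪ S^{-1}: a letter (b, s) stands for s (b = true) or s^-1. *)
Definition eval_word (w : list (prod bool G)) : G :=
  fold_right (fun (l : prod bool G) (acc : G) => mul (if fst l then snd l else inv (snd l)) acc) one w.

Definition word_over (S : list G) (w : list (prod bool G)) : Prop :=
  forall l : prod bool G, In l w -> In (snd l) S.

Definition is_word_length (S : list G) (g : G) (n : nat) : Prop :=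
  (exists w, word_over S w /\ eval_word w = g /\ length w = n) /\
  (forall w, word_over S w -> eval_word w = g -> (n <= length w)%nat).

(* The induced map of phi on H_1(N,Q) = N^ab ⊗ Q is unipotent, i.e.
   (phi_* - 1)^k = 0 on N^ab ⊗ Q for some k.  In multiplicative notation
   (phi_* - 1) is induced by x |-> phi(x) x^-1 on N^ab, and an element of
   N^ab vanishes in N^ab ⊗ Q iff it is torsion, i.e. some positive power of
   a representative lies in [N,N] = lcs 1. *)
Definition H1Q_unipotent (phi : G -> G) : Prop :=
  exists k : nat, forall x : G,
    exists m : nat, (0 < m)%nat /\
      lcs 1 (gpow (Nat.iter k (fun y => mul (phi y) (inv y)) x) m).

End GroupNotions.

Arguments gpow {G} mul one x n.
Arguments gcomm {G} mul inv x y.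
Arguments gen {G} mul inv one P _.
Arguments lcs {G} mul inv one i _.
Arguments nilpotent {G} mul inv one.
Arguments torsion_free {G} mul one.
Arguments generates {G} mul inv one S.
Arguments is_automorphism {G} mul phi.
Arguments eval_word {G} mul inv one w.
Arguments word_over {G} S w.
Arguments is_word_length {G} mul inv one S g n.
Arguments H1Q_unipotent {G} mul inv one phi.
Arguments is_group {G} mul inv one.

(* Main.v *)
Require Import Defs.
From Stdlib Require Import Reals List Arith Lia Lra IndefiniteDescription Classical_Prop.
From Coquelicot Require Import Coquelicot.
Local Open Scope nat_scope.

Section Grp.
Variables (G : Type) (mul : G -> G -> G) (inv : G -> G) (one : G).
Hypothesis HG : is_group mul inv one.
Local Infix "⋅" := mul (at level 40, left associativity).

Lemma mA x y z : x ⋅ (y ⋅ z) = x ⋅ y ⋅ z.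
Proof. apply (grp_assoc _ _ _ _ HG). Qed.
Lemma m1l x : one ⋅ x = x. Proof. apply (grp_mul1l _ _ _ _ HG). Qed.
Lemma m1r x : x ⋅ one = x. Proof. apply (grp_mul1r _ _ _ _ HG). Qed.
Lemma mVl x : inv x ⋅ x = one. Proof. apply (grp_mulVl _ _ _ _ HG). Qed.
Lemma mVr x : x ⋅ inv x = one. Proof. apply (grp_mulVr _ _ _ _ HG). Qed.

Lemma mKl x y : inv x ⋅ (x ⋅ y) = y.
Proof. now rewrite mA, mVl, m1l. Qed.
Lemma mKr x y : x ⋅ (inv x ⋅ y) = y.
Proof. now rewrite mA, mVr, m1l. Qed.
Lemma mKVr x y : x ⋅ y ⋅ inv y = x.
Proof. now rewrite <- mA, mVr, m1r. Qed.
Lemma mVKr x y : x ⋅ inv y ⋅ y = x.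
Proof. now rewrite <- mA, mVl, m1r. Qed.

Lemma inv_uniq x y : x ⋅ y = one -> y = inv x.
Proof. intros H. rewrite <- (mKl x y), H. apply m1r. Qed.
Lemma inv_inv x : inv (inv x) = x.
Proof. symmetry. apply inv_uniq. apply mVl. Qed.
Lemma inv_mul x y : inv (x ⋅ y) = inv y ⋅ inv x.
Proof. symmetry. apply inv_uniq. rewrite <- mA, (mA y), mVr, m1l. apply mVr. Qed.
Lemma inv_one : inv one = one.
Proof. symmetry. apply inv_uniq. apply m1l. Qed.
Ltac gs := repeat progress (rewrite ?inv_mul, ?inv_inv, ?inv_one, <- ?mA, ?mKl, ?mKr, ?mVl, ?mVr, ?m1l, ?m1r).

Lemma mcancel_l a x y : a ⋅ x = a ⋅ y -> x = y.
Proof. intros H. rewrite <- (mKl a x), H. apply mKl. Qed.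

Record nsub (H : G -> Prop) : Prop := {
  ns1 : H one; nsM : forall x y, H x -> H y -> H (x ⋅ y);
  nsV : forall x, H x -> H (inv x);
  nsJ : forall g x, H x -> H (inv g ⋅ x ⋅ g) }.

Definition cg (H : G -> Prop) x y := H (x ⋅ inv y).

Section NS.
Variable H : G -> Prop.
Hypothesis nH : nsub H.
Lemma nsJ' g x : H x -> H (g ⋅ x ⋅ inv g).
Proof. intros. rewrite <- (inv_inv g) at 1. now apply nsJ. Qed.
Lemma cg_refl x : cg H x x. Proof. unfold cg. rewrite mVr. apply nH. Qed.
Lemma cg_sym x y : cg H x y -> cg H y x.
Proof. unfold cg. intros h. apply (nsV _ nH) in h. now rewrite inv_mul, inv_inv in h. Qed.
Lemma cg_trans x y z : cg H x y -> cg H y z -> cg H x z.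
Proof. unfold cg. intros h1 h2. pose proof (nsM _ nH _ _ h1 h2) as h.
  now rewrite mA, mVKr in h. Qed.
Lemma cg_mul x x' y y' : cg H x x' -> cg H y y' -> cg H (x ⋅ y) (x' ⋅ y').
Proof. unfold cg. intros h1 h2. rewrite inv_mul.
  replace (x ⋅ y ⋅ (inv y' ⋅ inv x')) with ((x ⋅ (y ⋅ inv y') ⋅ inv x) ⋅ (x ⋅ inv x')).
  - apply (nsM _ nH); [apply nsJ'; auto | auto].
  - rewrite <- !mA, mKl. reflexivity.
Qed.
Lemma cg_inv x y : cg H x y -> cg H (inv x) (inv y).
Proof. unfold cg. intros h. rewrite inv_inv.
  replace (inv x ⋅ y) with (inv x ⋅ inv (x ⋅ inv y) ⋅ inv (inv x)).
  - apply nsJ'. now apply (nsV _ nH).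
  - gs. reflexivity.
Qed.
Lemma cg_one x : cg H x one <-> H x.
Proof. unfold cg. rewrite inv_one, m1r. tauto. Qed.
Lemma cg_H x y : H x -> H y -> cg H x y.
Proof. intros. unfold cg. apply (nsM _ nH); auto. now apply (nsV _ nH). Qed.
End NS.

Lemma gen_nsub (P : G -> Prop) :
  (forall g x, P x -> gen mul inv one P (inv g ⋅ x ⋅ g)) -> nsub (gen mul inv one P).
Proof.
  intros hP. constructor.
  - apply gen_one.
  - intros; now apply gen_mul.
  - intros; now apply gen_inv.
  - intros g x hx. induction hx.
    + now apply hP.
    + rewrite m1r, mVl. apply gen_one.
    + replace (inv g ⋅ (x ⋅ y) ⋅ g) with ((inv g ⋅ x ⋅ g) ⋅ (inv g ⋅ y ⋅ g)).
      * now apply gen_mul.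
      * rewrite <- !mA. f_equal. f_equal. rewrite mKr. reflexivity.
    + replace (inv g ⋅ inv x ⋅ g) with (inv (inv g ⋅ x ⋅ g)).
      * now apply gen_inv.
      * rewrite !inv_mul, inv_inv, mA. reflexivity.
Qed.

Lemma gen_ind' (P Q : G -> Prop) :
  (forall x, P x -> Q x) -> Q one -> (forall x y, Q x -> Q y -> Q (x ⋅ y)) ->
  (forall x, Q x -> Q (inv x)) -> forall x, gen mul inv one P x -> Q x.
Proof. intros h1 h2 h3 h4 x hx. induction hx; auto. Qed.

Definition gc := gcomm mul inv.

Lemma gc_conj g x y : inv g ⋅ gc x y ⋅ g = gc (inv g ⋅ x ⋅ g) (inv g ⋅ y ⋅ g).
Proof.
  unfold gc, gcomm. rewrite !inv_mul, !inv_inv.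
  rewrite <- !mA. f_equal. rewrite !mKr. reflexivity.
Qed.

Definition L := lcs mul inv one.

Lemma lcs_nsub i : nsub (L i).
Proof.
  induction i.
  - constructor; simpl; auto.
  - apply gen_nsub. intros g z [x [y [hy ->]]].
    apply gen_base. exists (inv g ⋅ x ⋅ g), (inv g ⋅ y ⋅ g). split.
    + now apply (nsJ _ IHi).
    + apply gc_conj.
Qed.

Lemma Lc_one k x : L k x -> cg (L k) x one.
Proof. apply cg_one. Qed.
Lemma Lc_one' k x : cg (L k) x one -> L k x.
Proof. apply cg_one. Qed.

Lemma L1 i : L i one. Proof. apply (lcs_nsub i). Qed.
Lemma LM i x y : L i x -> L i y -> L i (x ⋅ y). Proof. apply (lcs_nsub i). Qed.
Lemma LV i x : L i x -> L i (inv x). Proof. apply (lcs_nsub i). Qed.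

Lemma L_gc i x y : L i y -> L (S i) (gc x y).
Proof. intros h. apply gen_base. exists x, y. auto. Qed.

Lemma L_S i x : L (S i) x -> L i x.
Proof.
  intros h. simpl in h. revert x h. apply gen_ind'.
  - intros z [x [y [hy ->]]]. unfold gcomm.
    replace (inv x ⋅ inv y ⋅ (x ⋅ y)) with ((inv x ⋅ inv y ⋅ x) ⋅ y) by (gs; reflexivity).
    apply LM; auto. apply (nsJ _ (lcs_nsub i)). now apply LV.
  - apply L1.
  - apply LM.
  - apply LV.
Qed.

Lemma L_le i j x : (i <= j)%nat -> L j x -> L i x.
Proof. intros h. induction h; auto. intros; apply IHh, L_S; auto. Qed.

Lemma comm_mod j g w : L j w -> cg (L (S j)) (g ⋅ w) (w ⋅ g).
Proof.
  intros hw. assert (e : g ⋅ w = w ⋅ g ⋅ gc g w).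
  { unfold gc, gcomm. gs. reflexivity. }
  rewrite e. unfold cg.
  apply nsJ'. apply lcs_nsub. apply L_gc. auto.
Qed.


Section Hom.
Variable f : G -> G.
Hypothesis Hf : forall x y, f (x ⋅ y) = f x ⋅ f y.

Lemma f1 : f one = one.
Proof. apply (mcancel_l (f one)). rewrite <- Hf, !m1r. reflexivity. Qed.
Lemma fV x : f (inv x) = inv (f x).
Proof. apply inv_uniq. rewrite <- Hf, mVr. apply f1. Qed.
Lemma f_gc x y : f (gc x y) = gc (f x) (f y).
Proof. unfold gc, gcomm. rewrite !Hf, !fV. reflexivity. Qed.
Lemma f_L i x : L i x -> L i (f x).
Proof.
  revert x; induction i; intros x h; [exact I|].
  revert x h. apply gen_ind'.
  - intros z [a [b [hb ->]]]. rewrite f_gc. apply L_gc. auto.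
  - rewrite f1. apply L1.
  - intros. rewrite Hf. apply LM; auto.
  - intros. rewrite fV. apply LV; auto.
Qed.

Definition ps x := f x ⋅ inv x.
Definition pn m := Nat.iter m ps.

Lemma ps_one : ps one = one.
Proof. unfold ps. rewrite f1, inv_one. apply m1r. Qed.
Lemma ps_L i x : L i x -> L i (ps x).
Proof. intros. apply LM; [apply f_L|apply LV]; auto. Qed.
Lemma ps_f x : ps (f x) = f (ps x).
Proof. unfold ps. rewrite Hf, fV. reflexivity. Qed.
Lemma ps_mul j y z : L j z -> cg (L (S j)) (ps (y ⋅ z)) (ps y ⋅ ps z).
Proof.
  intros hz. unfold ps. rewrite Hf, inv_mul.
  replace (f y ⋅ f z ⋅ (inv z ⋅ inv y)) with (f y ⋅ (ps z ⋅ inv y)) by (unfold ps; gs; reflexivity).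
  replace (f y ⋅ inv y ⋅ (f z ⋅ inv z)) with (f y ⋅ (inv y ⋅ ps z)) by (unfold ps; gs; reflexivity).
  apply cg_mul; [apply lcs_nsub| apply cg_refl, lcs_nsub |].
  apply cg_sym; [apply lcs_nsub|]. apply comm_mod. apply ps_L; auto.
Qed.
Lemma ps_cg j y y' : cg (L (S j)) y y' -> cg (L (S j)) (ps y) (ps y').
Proof.
  intros h. set (e := inv y ⋅ y').
  assert (he : L (S j) e).
  { unfold e. replace (inv y ⋅ y') with (inv y ⋅ inv (y ⋅ inv y') ⋅ y) by (gs; reflexivity).
    apply (nsJ _ (lcs_nsub _)). apply LV. exact h. }
  assert (ey : y' = y ⋅ e) by (unfold e; gs; reflexivity).
  rewrite ey. apply cg_sym; [apply lcs_nsub|].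
  eapply cg_trans; [apply lcs_nsub| apply ps_mul; apply L_S; exact he|].
  rewrite <- (m1r (ps y)) at 2. apply cg_mul; [apply lcs_nsub|apply cg_refl, lcs_nsub|].
  apply Lc_one. apply ps_L. auto.
Qed.

Lemma f_ps x : f x = ps x ⋅ x.
Proof. unfold ps. gs. reflexivity. Qed.

Lemma pn_succ_r m x : pn (S m) x = pn m (ps x).
Proof. apply Nat.iter_succ_r. Qed.
Lemma pn_add a b x : pn (a + b) x = pn a (pn b x).
Proof. apply Nat.iter_add. Qed.

Lemma pn_one m : pn m one = one.
Proof. induction m; [reflexivity|]. change (ps (pn m one) = one). rewrite IHm. apply ps_one. Qed.
Lemma pn_L m i x : L i x -> L i (pn m x).
Proof. intros h. induction m; [exact h|]. change (L i (ps (pn m x))). apply ps_L; auto. Qed.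
Lemma pn_cg m j y y' : cg (L (S j)) y y' -> cg (L (S j)) (pn m y) (pn m y').
Proof. intros h. induction m; [exact h|]. change (cg (L (S j)) (ps (pn m y)) (ps (pn m y'))). apply ps_cg; auto. Qed.
Lemma pn_mul m j y z : L j z -> cg (L (S j)) (pn m (y ⋅ z)) (pn m y ⋅ pn m z).
Proof.
  intros hz. induction m.
  - apply cg_refl, lcs_nsub.
  - change (cg (L (S j)) (ps (pn m (y ⋅ z))) (ps (pn m y) ⋅ ps (pn m z))). eapply cg_trans; [apply lcs_nsub| apply ps_cg; apply IHm|].
    apply ps_mul. apply pn_L. auto.
Qed.
Lemma pn_f m x : pn m (f x) = f (pn m x).
Proof. induction m; [reflexivity|]. change (ps (pn m (f x)) = f (ps (pn m x))). rewrite IHm. apply ps_f. Qed.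

End Hom.

Lemma conj_mod k c v : L k c -> cg (L (S k)) (inv v ⋅ c ⋅ v) c.
Proof.
  intros h. unfold cg. replace (inv v ⋅ c ⋅ v ⋅ inv c) with (gc v (inv c)).
  - apply L_gc. apply LV. auto.
  - unfold gc, gcomm. gs. reflexivity.
Qed.

Lemma gc_mul_l i u v w : L i w -> cg (L (S (S i))) (gc (u ⋅ v) w) (gc u w ⋅ gc v w).
Proof.
  intros hw. replace (gc (u ⋅ v) w) with ((inv v ⋅ gc u w ⋅ v) ⋅ gc v w).
  - apply cg_mul; [apply lcs_nsub| |apply cg_refl, lcs_nsub].
    apply conj_mod. apply L_gc; auto.
  - unfold gc, gcomm. gs. reflexivity.
Qed.

Lemma gc_mul_r i u v w : L i v -> cg (L (S (S i))) (gc u (v ⋅ w)) (gc u v ⋅ gc u w).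
Proof.
  intros hv. replace (gc u (v ⋅ w)) with (gc u w ⋅ (inv w ⋅ gc u v ⋅ w)).
  - eapply cg_trans; [apply lcs_nsub| |].
    + apply cg_mul; [apply lcs_nsub|apply cg_refl, lcs_nsub|]. apply conj_mod. apply L_gc; eauto.
    + apply comm_mod. apply L_gc; auto.
  - unfold gc, gcomm. gs. reflexivity.
Qed.

Lemma gc_one_l w : gc one w = one.
Proof. unfold gc, gcomm. gs. reflexivity. Qed.

Lemma cg_mul1 (H : G -> Prop) a b : nsub H -> cg H a one -> cg H b one -> cg H (a ⋅ b) one.
Proof. intros nH h1 h2. rewrite <- (m1r one). apply cg_mul; auto. Qed.

Lemma gc_L1 i c w : L 1 c -> L i w -> cg (L (S (S i))) (gc c w) one.
Proof.
  intros hc hw. pose proof (lcs_nsub (S (S i))) as nM.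
  assert (hinv : forall a, cg (L (S (S i))) (gc (inv a) w ⋅ gc a w) one).
  { intros a. rewrite <- (gc_one_l w). rewrite <- (mVl a). apply cg_sym; auto. apply gc_mul_l; auto. }
  revert c hc. apply gen_ind'.
  - intros z [x [y [_ ->]]]. unfold gcomm.
    eapply cg_trans; [auto| apply gc_mul_l; eauto|].
    eapply cg_trans; [auto| apply cg_mul; [auto|apply gc_mul_l; eauto|apply gc_mul_l; eauto]|].
    set (A := gc (inv x) w). set (B := gc (inv y) w). set (C := gc x w). set (D := gc y w).
    replace (A ⋅ B ⋅ (C ⋅ D)) with (A ⋅ (B ⋅ C) ⋅ D) by (gs; reflexivity).
    eapply cg_trans; [auto| apply cg_mul; [auto| apply cg_mul; [auto|apply cg_refl; auto|]|apply cg_refl; auto]|].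
    + apply comm_mod with (j := S i). unfold C. apply L_gc. auto.
    + replace (A ⋅ (C ⋅ B) ⋅ D) with ((A ⋅ C) ⋅ (B ⋅ D)) by (gs; reflexivity).
      apply cg_mul1; auto; [apply (hinv x)|apply (hinv y)].
  - rewrite gc_one_l. apply cg_refl; auto.
  - intros x y hx hy. eapply cg_trans; [auto| apply gc_mul_l; eauto|].
    apply cg_mul1; auto.
  - intros x hx. eapply cg_trans; [auto| |apply (hinv x)].
    rewrite <- (m1r (gc (inv x) w)) at 1. apply cg_mul; auto. apply cg_refl; auto.
    apply cg_sym; auto.
Qed.

Section Layer.
Variable f : G -> G.
Hypothesis Hf : forall x y, f (x ⋅ y) = f x ⋅ f y.
Local Notation ps := (ps f).
Local Notation pn := (pn f).

Lemma pn_cg1 m j y : cg (L (S j)) y one -> cg (L (S j)) (pn m y) one.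
Proof. intros h. rewrite <- (pn_one f Hf m). apply (pn_cg f Hf); auto. Qed.

Lemma ps_gc i a b : L i b ->
  cg (L (S (S i))) (ps (gc a b)) (gc (ps a) (ps b) ⋅ gc (ps a) b ⋅ gc a (ps b)).
Proof.
  intros hb. pose proof (lcs_nsub (S (S i))) as nM.
  assert (hpb : L i (ps b)) by (apply (ps_L f Hf); auto).
  unfold ps at 1. rewrite (f_gc f Hf).
  rewrite (f_ps f a), (f_ps f b).
  replace (gc (ps a) (ps b) ⋅ gc (ps a) b ⋅ gc a (ps b))
    with ((gc (ps a) (ps b) ⋅ gc (ps a) b) ⋅ (gc a (ps b) ⋅ gc a b) ⋅ inv (gc a b))
    by (gs; reflexivity).
  apply cg_mul; auto; [|apply cg_refl; auto].
  eapply cg_trans; [auto| apply gc_mul_l; apply LM; eauto|].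
  apply cg_mul; auto; apply gc_mul_r; auto.
Qed.

Lemma layer_step i K0 Ki :
  (forall x, L 1 (pn K0 x)) ->
  (forall b, L i b -> L (S i) (pn Ki b)) ->
  forall y, L (S i) y -> L (S (S i)) (pn (K0 + Ki) y).
Proof.
  intros h0 hi. pose proof (lcs_nsub (S (S i))) as nM.
  assert (key : forall a b, L i b -> forall m jj ll, (K0 - jj) + (Ki - ll) <= m ->
     cg (L (S (S i))) (pn m (gc (pn jj a) (pn ll b))) one).
  { intros a b hb m. induction m as [|m IH]; intros jj ll hm.
    all: destruct (le_lt_dec K0 jj) as [hj|hj].
    1,3: apply pn_cg1; apply gc_L1; [|apply (pn_L f Hf); auto];
         replace jj with (K0 + (jj - K0)) by lia; rewrite (pn_add f); apply h0.
    all: destruct (le_lt_dec Ki ll) as [hl|hl].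
    1,3: apply pn_cg1; apply Lc_one; apply L_gc;
         replace ll with (Ki + (ll - Ki)) by lia; rewrite (pn_add f); apply hi;
         apply (pn_L f Hf); auto.
    - lia.
    - rewrite (pn_succ_r f).
      assert (hpa : L i (pn ll b)) by (apply (pn_L f Hf); auto).
      eapply cg_trans; [auto| apply (pn_cg f Hf); apply ps_gc; exact hpa|].
      eapply cg_trans; [auto| apply (pn_mul f Hf); apply L_gc, (ps_L f Hf), hpa |].
      apply cg_mul1; [exact nM| |apply (IH jj (S ll)); lia].
      eapply cg_trans; [auto| apply (pn_mul f Hf); apply L_gc; exact hpa|].
      apply cg_mul1; [exact nM| apply (IH (S jj) (S ll)); lia | apply (IH (S jj) ll); lia]. }
  intros y hy. cut (L (S i) y /\ L (S (S i)) (pn (K0+Ki) y)); [tauto|]. revert y hy.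
  refine (gen_ind' _ (fun y => L (S i) y /\ L (S (S i)) (pn (K0+Ki) y)) _ _ _ _).
  - intros z [a [b [hb ->]]]. split; [apply L_gc; auto|]. apply Lc_one'.
    apply (key a b hb (K0 + Ki) 0 0). lia.
  - rewrite (pn_one f Hf). split; apply L1.
  - intros x y [hx1 hx] [hy1 hy]. split; [apply LM; auto|]. apply Lc_one'.
    eapply cg_trans; [auto| apply (pn_mul f Hf); exact hy1|].
    apply cg_mul1; auto; apply Lc_one; auto.
  - intros x [hx1 hx]. split; [apply LV; auto|]. apply Lc_one'.
    assert (h1 : cg (L (S (S i))) (pn (K0+Ki) (x ⋅ inv x)) (pn (K0+Ki) x ⋅ pn (K0+Ki) (inv x))).
    { apply (pn_mul f Hf). apply LV. exact hx1. }
    rewrite mVr, (pn_one f Hf) in h1.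
    apply cg_sym in h1; auto.
    replace (pn (K0 + Ki) (inv x)) with (inv (pn (K0+Ki) x) ⋅ (pn (K0 + Ki) x ⋅ pn (K0 + Ki) (inv x))) by (gs; reflexivity).
    apply cg_mul1; auto. apply Lc_one, LV; auto.
Qed.
End Layer.

Lemma unip_chain f (Hf : forall x y, f (x ⋅ y) = f x ⋅ f y) K0 :
  (forall x, L 1 (pn f K0 x)) -> forall i, exists R, forall x, L i (pn f R x).
Proof.
  intros h0.
  assert (U : forall i, exists K, forall b, L i b -> L (S i) (pn f K b)).
  { induction i as [|i [Ki hi]].
    - exists K0. intros b _. apply h0.
    - exists (K0 + Ki). apply layer_step; auto. }
  induction i as [|i [R hR]].
  - exists 0. intros; exact I.
  - destruct (U i) as [K hK]. exists (K + R). intros x. rewrite pn_add. apply hK, hR.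
Qed.

Definition gp := gpow mul one.
Lemma gp_add x a b : gp x (a + b) = gp x a ⋅ gp x b.
Proof. induction a; simpl. - now rewrite m1l. - unfold gp in *. simpl. rewrite IHa. apply mA. Qed.
Lemma gp_mul x a b : gp x (a * b) = gp (gp x b) a.
Proof. induction a; simpl; auto. unfold gp in *. simpl. rewrite <- IHa. rewrite <- gp_add. reflexivity. Qed.
Lemma gp_one n : gp one n = one.
Proof. induction n; simpl; auto. unfold gp in *. simpl. rewrite IHn. apply m1l. Qed.
Lemma f_gp f (Hf : forall x y, f (x ⋅ y) = f x ⋅ f y) x n : f (gp x n) = gp (f x) n.
Proof. induction n; simpl. - apply f1; auto. - unfold gp in *. simpl. rewrite Hf, IHn. reflexivity. Qed.
Lemma cg_gp H a b n : nsub H -> cg H a b -> cg H (gp a n) (gp b n).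
Proof. intros nH h. induction n; simpl. - apply cg_refl; auto. - apply cg_mul; auto. Qed.
Lemma cg_gp1 H a n : nsub H -> cg H a one -> cg H (gp a n) one.
Proof. intros nH h. induction n; simpl. - apply cg_refl; auto. - apply cg_mul1; auto. Qed.

Fixpoint Pw (bs : list G) (es : list nat) : G :=
  match bs, es with b :: bs', e :: es' => gp b e ⋅ Pw bs' es' | _, _ => one end.
Fixpoint vadd (es es' : list nat) : list nat :=
  match es, es' with e :: t, e' :: t' => (e + e') :: vadd t t' | _, _ => nil end.
Fixpoint vecs (M n : nat) : list (list nat) :=
  match n with 0 => nil :: nil | S n => flat_map (fun v => map (fun e => e :: v) (seq 0 M)) (vecs M n) end.

Lemma vecs_in M es : (forall e, In e es -> e < M) -> In es (vecs M (length es)).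
Proof.
  induction es as [|e es IH]; intros h; simpl; auto.
  apply in_flat_map. exists es. split; [apply IH; intros; apply h; simpl; auto|].
  apply in_map_iff. exists e. split; [reflexivity|]. apply in_seq. specialize (h e (or_introl eq_refl)). lia.
Qed.

Local Notation cg1 := (cg (L 1)).
Lemma n1 : nsub (L 1). Proof. apply lcs_nsub. Qed.
Local Hint Resolve n1 : core.

Lemma c1_refl x : cg1 x x. Proof. apply cg_refl; auto. Qed.
Local Hint Resolve c1_refl : core.
Lemma comm1 g w : cg1 (g ⋅ w) (w ⋅ g). Proof. apply (comm_mod 0). exact I. Qed.

Lemma Pw_zero bs : Pw bs (repeat 0 (length bs)) = one.
Proof. induction bs; simpl; auto. rewrite IHbs. unfold gp. simpl. apply m1l. Qed.

Lemma Pw_mem bs b : In b bs -> exists es, length es = length bs /\ b = Pw bs es.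
Proof.
  induction bs as [|b0 bs IH]; simpl; [tauto|]. intros [<-|h].
  - exists (1 :: repeat 0 (length bs)). simpl. rewrite repeat_length, Pw_zero. split; auto.
    unfold gp. simpl. rewrite !m1r. reflexivity.
  - destruct (IH h) as [es [he ->]]. exists (0 :: es). simpl. split; auto.
    unfold gp. simpl. rewrite m1l. reflexivity.
Qed.

Lemma Pw_add bs : forall es es', length es = length bs -> length es' = length bs ->
  cg1 (Pw bs es ⋅ Pw bs es') (Pw bs (vadd es es')).
Proof.
  induction bs as [|b bs IH]; intros [|e es] [|e' es'] h1 h2; simpl in *; try discriminate.
  - rewrite m1l. auto.
  - replace (gp b e ⋅ Pw bs es ⋅ (gp b e' ⋅ Pw bs es')) with (gp b e ⋅ (Pw bs es ⋅ gp b e') ⋅ Pw bs es')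
      by (gs; reflexivity).
    eapply cg_trans; [auto| apply cg_mul; [auto| apply cg_mul; [auto|auto|apply comm1]|auto]|].
    replace (gp b e ⋅ (gp b e' ⋅ Pw bs es) ⋅ Pw bs es') with (gp b (e + e') ⋅ (Pw bs es ⋅ Pw bs es'))
      by (rewrite gp_add; gs; reflexivity).
    apply cg_mul; auto.
Qed.

Lemma cg_inv_r x a : cg1 (a ⋅ x) one -> cg1 (inv x) a.
Proof.
  intros h. apply Lc_one' in h. unfold cg. replace (inv x ⋅ inv a) with (inv (a ⋅ x)) by (gs; reflexivity).
  apply LV; auto.
Qed.

Lemma inv_gp M b e : 0 < M -> L 1 (gp b M) -> cg1 (inv (gp b e)) (gp b (e * (M - 1))).
Proof.
  intros hM hb. apply cg_inv_r. rewrite <- gp_add.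
  replace (e * (M - 1) + e) with (e * M) by nia. rewrite gp_mul.
  apply cg_gp1; auto. apply Lc_one; auto.
Qed.

Lemma Pw_inv M bs : 0 < M -> (forall b, In b bs -> L 1 (gp b M)) -> forall es,
  cg1 (inv (Pw bs es)) (Pw bs (map (fun e => e * (M - 1)) es)).
Proof.
  intros hM. induction bs as [|b bs IH]; intros hb [|e es]; simpl; try (rewrite inv_one; auto).
  rewrite inv_mul. eapply cg_trans; [auto|apply comm1|].
  apply cg_mul; auto.
  - apply inv_gp; auto. apply hb; simpl; auto.
  - apply IH. intros; apply hb; simpl; auto.
Qed.

Lemma Pw_mod M bs : 0 < M -> (forall b, In b bs -> L 1 (gp b M)) -> forall es,
  cg1 (Pw bs es) (Pw bs (map (fun e => e mod M) es)).
Proof.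
  intros hM. induction bs as [|b bs IH]; intros hb [|e es]; simpl; auto.
  apply cg_mul; auto; [|apply IH; intros; apply hb; simpl; auto].
  rewrite (Nat.div_mod_eq e M) at 1. rewrite gp_add, Nat.mul_comm, gp_mul.
  rewrite <- (m1l (gp b (e mod M))) at 2. apply cg_mul; auto.
  apply cg_gp1; auto. apply (Lc_one 1). apply hb; simpl; auto.
Qed.

Lemma vadd_length es es' : length es = length es' -> length (vadd es es') = length es.
Proof. revert es'; induction es; intros [|e' es'] h; simpl in *; try discriminate; auto. Qed.

Lemma pigeon (E : nat -> list nat) (V : list (list nat)) :
  (forall n, In (E n) V) -> exists n1 n2, n1 < n2 /\ E n1 = E n2.
Proof.
  intros hE. apply Classical_Prop.NNPP. intros hn.
  set (l := seq 0 (S (length V))).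
  assert (hnd : NoDup (map E l)).
  { apply NoDup_map_NoDup_ForallPairs; [|apply seq_NoDup].
    intros a b _ _ hab. destruct (lt_eq_lt_dec a b) as [[h|h]|h]; auto;
    exfalso; apply hn; [exists a, b | exists b, a]; auto. }
  apply NoDup_incl_length with (l' := V) in hnd.
  - unfold l in hnd. rewrite length_map, length_seq in hnd. lia.
  - intros v hv. apply in_map_iff in hv. destruct hv as [n [<- _]]. apply hE.
Qed.

Section Aut.
Variable phi : G -> G.
Hypothesis Hp : forall x y, phi (x ⋅ y) = phi x ⋅ phi y.
Hypothesis Hinj : forall x y, phi x = phi y -> x = y.
Hypothesis Hsur : forall y, exists x, phi x = y.

Definition it n := Nat.iter n phi.
Lemma it_hom n x y : it n (x ⋅ y) = it n x ⋅ it n y.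
Proof. induction n; [reflexivity|]. change (phi (it n (x ⋅ y)) = phi (it n x) ⋅ phi (it n y)). rewrite IHn. apply Hp. Qed.
Lemma it_add a b x : it (a + b) x = it a (it b x).
Proof. apply Nat.iter_add. Qed.

Lemma L1_pre y : L 1 y -> exists c, L 1 c /\ phi c = y.
Proof.
  revert y. apply gen_ind'.
  - intros z [x [y [_ ->]]]. destruct (Hsur x) as [x0 <-]. destruct (Hsur y) as [y0 <-].
    exists (gc x0 y0). split; [apply L_gc; exact I|]. apply f_gc; auto.
  - exists one. split; [apply L1|]. apply f1; auto.
  - intros x y [c1 [h1 <-]] [c2 [h2 <-]]. exists (c1 ⋅ c2). split; [apply LM; auto|]. apply Hp.
  - intros x [c [h <-]]. exists (inv c). split; [apply LV; auto|]. apply fV; auto.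
Qed.
Lemma inj1 x : L 1 (phi x) -> L 1 x.
Proof. intros h. destruct (L1_pre _ h) as [c [hc e]]. apply Hinj in e. subst; auto. Qed.
Lemma it_cg n u v : cg1 u v -> cg1 (it n u) (it n v).
Proof.
  intros h. unfold cg in *. replace (it n u ⋅ inv (it n v)) with (it n (u ⋅ inv v)).
  - apply f_L; auto. apply it_hom.
  - rewrite it_hom, (fV (it n)); auto. apply it_hom.
Qed.
Lemma it_cg_inv n u v : cg1 (it n u) (it n v) -> cg1 u v.
Proof.
  intros h. unfold cg in *. rewrite <- (fV (it n)), <- it_hom in h by apply it_hom.
  revert h. generalize (u ⋅ inv v). induction n; auto. intros y h. apply IHn. apply inj1. exact h.
Qed.

Variable Sl : list G.
Hypothesis HS : generates mul inv one Sl.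
Variable k : nat.
Hypothesis hk : forall x, exists m, 0 < m /\ L 1 (gp (pn phi k x) m).

Definition bs := map (pn phi k) Sl.

Lemma unifM_gen l : exists M, 0 < M /\ forall b, In b (map (pn phi k) l) -> L 1 (gp b M).
Proof.
  induction l as [|s S' IH].
  - exists 1. split; auto. simpl. tauto.
  - destruct IH as [M [hM hb]]. destruct (hk s) as [m [hm hs]].
    exists (M * m). split; [lia|]. intros b hb'. simpl in hb'. destruct hb' as [<-|hb'].
    + rewrite gp_mul. apply Lc_one', cg_gp1; auto. apply Lc_one; auto.
    + rewrite Nat.mul_comm, gp_mul. apply Lc_one', cg_gp1; auto. apply Lc_one; auto.
Qed.
Lemma unifM : exists M, 0 < M /\ forall b, In b bs -> L 1 (gp b M).
Proof. apply unifM_gen. Qed.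

Lemma pn_inv1 x : cg1 (pn phi k (inv x)) (inv (pn phi k x)).
Proof.
  pose proof (pn_mul phi Hp k 0 x (inv x) I) as h.
  rewrite mVr, (pn_one phi Hp) in h.
  unfold cg in h. rewrite m1l in h. apply LV in h. rewrite inv_inv in h.
  unfold cg. rewrite inv_inv.
  replace (pn phi k (inv x) ⋅ pn phi k x) with (inv (pn phi k x) ⋅ (pn phi k x ⋅ pn phi k (inv x)) ⋅ pn phi k x)
    by (gs; reflexivity).
  apply nsJ; auto.
Qed.

Lemma repr (M : nat) : 0 < M -> (forall b, In b bs -> L 1 (gp b M)) ->
  forall x, exists es, In es (vecs M (length bs)) /\ cg1 (pn phi k x) (Pw bs es).
Proof.
  intros hM hb x.
  assert (h : exists es, length es = length bs /\ cg1 (pn phi k x) (Pw bs es)).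
  { revert x. intros x. generalize (HS x). revert x. apply gen_ind'.
    - intros x hx. destruct (Pw_mem bs (pn phi k x)) as [es [he e]].
      + unfold bs. apply in_map; auto.
      + exists es. rewrite <- e. auto.
    - exists (repeat 0 (length bs)). rewrite repeat_length, Pw_zero, (pn_one phi Hp). auto.
    - intros x y [es [he hx]] [es' [he' hy]]. exists (vadd es es'). split.
      + rewrite vadd_length; congruence.
      + eapply cg_trans; [auto| apply (pn_mul phi Hp k 0); exact I|].
        eapply cg_trans; [auto| apply cg_mul; eauto|]. apply Pw_add; auto.
    - intros x [es [he hx]]. exists (map (fun e => e * (M - 1)) es). split.
      + rewrite length_map; auto.
      + eapply cg_trans; [auto| apply pn_inv1|].
        eapply cg_trans; [auto| apply cg_inv; eauto|]. apply Pw_inv; auto. }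
  destruct h as [es [he h]]. exists (map (fun e => e mod M) es). split.
  - rewrite <- he, <- (length_map (fun e => e mod M)). apply vecs_in.
    intros e he'. apply in_map_iff in he'. destruct he' as [e0 [<- _]]. apply Nat.mod_upper_bound. lia.
  - eapply cg_trans; [auto|exact h|]. apply Pw_mod; auto.
Qed.
Lemma pn_it n x : pn phi k (it n x) = it n (pn phi k x).
Proof.
  induction n; [reflexivity|]. change (pn phi k (phi (it n x)) = phi (it n (pn phi k x))).
  rewrite (pn_f phi Hp), IHn. reflexivity.
Qed.

Lemma period (M : nat) : 0 < M -> (forall b, In b bs -> L 1 (gp b M)) ->
  forall b, In b bs -> exists d, 0 < d /\ cg1 (it d b) b.
Proof.
  intros hM hb b hin. unfold bs in hin. apply in_map_iff in hin. destruct hin as [s0 [<- _]].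
  set (V := vecs M (length bs)).
  assert (hE : forall n, exists v, In v V /\ cg1 (it n (pn phi k s0)) (Pw bs v)).
  { intros n. rewrite <- pn_it. apply repr; auto. }
  set (E := fun n => proj1_sig (IndefiniteDescription.constructive_indefinite_description _ (hE n))).
  assert (hE' : forall n, In (E n) V /\ cg1 (it n (pn phi k s0)) (Pw bs (E n))).
  { intros n. unfold E. destruct (IndefiniteDescription.constructive_indefinite_description _ (hE n)); auto. }
  destruct (pigeon E V) as [n1 [n2 [hlt he]]]; [intros n; apply hE'|].
  exists (n2 - n1). split; [lia|].
  apply (it_cg_inv n1). rewrite <- it_add. replace (n1 + (n2 - n1)) with n2 by lia.
  eapply cg_trans; [auto| apply (proj2 (hE' n2))|]. rewrite <- he. apply cg_sym; auto. apply hE'.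
Qed.

Lemma it_mulp d b q : cg1 (it d b) b -> cg1 (it (d * q) b) b.
Proof.
  intros h. induction q.
  - rewrite Nat.mul_0_r. auto.
  - rewrite Nat.mul_succ_r, it_add. eapply cg_trans; [auto| apply it_cg; exact h|]. auto.
Qed.

Lemma period_all (M : nat) : 0 < M -> (forall b, In b bs -> L 1 (gp b M)) ->
  exists p, 0 < p /\ forall b, In b bs -> cg1 (it p b) b.
Proof.
  intros hM hb. pose proof (period M hM hb) as hper. clear hb.
  induction bs as [|b0 l IH].
  - exists 1. split; auto. simpl; tauto.
  - destruct IH as [p [hp hl]]; [intros; apply hper; simpl; auto|].
    destruct (hper b0) as [d [hd h0]]; [simpl; auto|].
    exists (d * p). split; [lia|]. intros b [<-|hb].
    + apply it_mulp; auto.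
    + rewrite Nat.mul_comm. apply it_mulp; auto.
Qed.

Lemma it_Pw p : (forall b, In b bs -> cg1 (it p b) b) -> forall es, cg1 (it p (Pw bs es)) (Pw bs es).
Proof.
  intros h. induction bs as [|b l IH]; intros [|e es]; simpl; try (rewrite (f1 (it p)); auto; apply it_hom).
  rewrite it_hom, (f_gp (it p)) by apply it_hom.
  apply cg_mul; auto.
  - apply cg_gp; auto. apply h; simpl; auto.
  - apply IH. intros; apply h; simpl; auto.
Qed.

Fixpoint Sp n y := match n with 0 => one | S n => it n y ⋅ Sp n y end.

Lemma ps_it n y : ps (it n) y = Sp n (ps phi y).
Proof.
  induction n; simpl.
  - unfold ps. simpl. apply mVr.
  - rewrite <- IHn. unfold ps. rewrite it_hom, (fV (it n)) by apply it_hom.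
    change (it (S n) y ⋅ inv y = it n (phi y) ⋅ inv (it n y) ⋅ (it n y ⋅ inv y)).
    replace (it n (phi y)) with (it (S n) y) by (apply Nat.iter_succ_r).
    gs. reflexivity.
Qed.

Lemma Sp_cg n a b : cg1 a b -> cg1 (Sp n a) (Sp n b).
Proof. intros h. induction n; simpl; auto. apply cg_mul; auto. apply it_cg; auto. Qed.
Lemma Sp_one n : Sp n one = one.
Proof. induction n; simpl; auto. rewrite IHn, (f1 (it n)) by apply it_hom. apply m1l. Qed.
Lemma ps_itf n y : ps phi (it n y) = it n (ps phi y).
Proof. unfold ps. rewrite it_hom, (fV (it n)) by apply it_hom.
  replace (phi (it n y)) with (it n (phi y)); auto. apply Nat.iter_swap. Qed.
Lemma ps_Sp n y : cg1 (ps phi (Sp n y)) (Sp n (ps phi y)).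
Proof.
  induction n; simpl.
  - rewrite (ps_one phi Hp). auto.
  - eapply cg_trans; [auto| apply (ps_mul phi Hp 0); exact I|].
    rewrite ps_itf. apply cg_mul; auto.
Qed.

Definition Spn p m := Nat.iter m (Sp p).
Lemma Spn_cg p m a b : cg1 a b -> cg1 (Spn p m a) (Spn p m b).
Proof. intros h. induction m; auto. apply Sp_cg. exact IHm. Qed.
Lemma Spn_one p m : Spn p m one = one.
Proof. induction m; auto. change (Sp p (Spn p m one) = one). rewrite IHm. apply Sp_one. Qed.
Lemma ps_Spn p m y : cg1 (ps phi (Spn p m y)) (Spn p m (ps phi y)).
Proof.
  induction m; [apply c1_refl|]. change (cg1 (ps phi (Sp p (Spn p m y))) (Sp p (Spn p m (ps phi y)))).
  eapply cg_trans; [auto| apply ps_Sp|]. apply Sp_cg. auto.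
Qed.
Lemma pn_itp p n x : cg1 (pn (it p) n x) (Spn p n (pn phi n x)).
Proof.
  induction n; [apply c1_refl|].
  change (cg1 (ps (it p) (pn (it p) n x)) (Sp p (Spn p n (ps phi (pn phi n x))))).
  rewrite ps_it. apply Sp_cg.
  eapply cg_trans; [auto| apply (ps_cg phi Hp 0); exact IHn|]. apply ps_Spn.
Qed.

Lemma exact_unip : exists p, 0 < p /\ forall x, L 1 (pn (it p) (S k) x).
Proof.
  destruct unifM as [M [hM hb]].
  destruct (period_all M hM hb) as [p [hp hpb]].
  exists p. split; auto. intros x. apply Lc_one'.
  eapply cg_trans; [auto| apply pn_itp|].
  unfold Spn. rewrite Nat.iter_succ_r. fold (Spn p k).
  change (pn phi (S k) x) with (ps phi (pn phi k x)). rewrite <- ps_it.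
  rewrite <- (Spn_one p k). apply Spn_cg.
  unfold ps. destruct (repr M hM hb x) as [es [_ he]].
  apply cg_trans with (y := Pw bs es ⋅ inv (Pw bs es)); auto.
  - apply cg_mul; auto.
    + eapply cg_trans; [auto| apply it_cg; exact he|]. apply it_Pw; auto.
    + apply cg_inv; auto.
  - rewrite mVr. auto.
Qed.

End Aut.

Section Len.
Variable Sg : list G.
Variable len : G -> nat.
Hypothesis Hlen : forall g, is_word_length mul inv one Sg g (len g).

Lemma eval_app w1 w2 : eval_word mul inv one (w1 ++ w2) = eval_word mul inv one w1 ⋅ eval_word mul inv one w2.
Proof. induction w1; simpl. - now rewrite m1l. - rewrite IHw1. apply mA. Qed.

Lemma len_mul x y : len (x ⋅ y) <= len x + len y.
Proof.
  destruct (Hlen x) as [[w1 [o1 [e1 l1]]] _]. destruct (Hlen y) as [[w2 [o2 [e2 l2]]] _].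
  destruct (Hlen (x ⋅ y)) as [_ hmin].
  rewrite <- l1, <- l2, <- length_app. apply hmin.
  - intros l hl. apply in_app_or in hl. destruct hl; auto.
  - rewrite eval_app. congruence.
Qed.
Lemma len_one : len one = 0.
Proof. destruct (Hlen one) as [_ hmin]. specialize (hmin nil). simpl in hmin.
  assert (h : len one <= 0) by (apply hmin; [intros l []| reflexivity]). lia. Qed.
Lemma len_pos x : x <> one -> 1 <= len x.
Proof.
  intros hx. destruct (Hlen x) as [[w [o [e l]]] _]. destruct w; simpl in *.
  - exfalso; auto.
  - lia.
Qed.

Lemma iter_hom f (Hf : forall x y, f (x ⋅ y) = f x ⋅ f y) n x y :
  Nat.iter n f (x ⋅ y) = Nat.iter n f x ⋅ Nat.iter n f y.
Proof. induction n; [reflexivity|]. simpl. rewrite IHn. apply Hf. Qed.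
Lemma iter_one f (Hf : forall x y, f (x ⋅ y) = f x ⋅ f y) n : Nat.iter n f one = one.
Proof. induction n; [reflexivity|]. simpl. rewrite IHn. apply f1; auto. Qed.

Lemma pg f (Hf : forall x y, f (x ⋅ y) = f x ⋅ f y) R :
  forall x, pn f R x = one -> exists C, forall n, len (Nat.iter n f x) <= C * (n + 1) ^ R.
Proof.
  induction R as [|R IH]; intros x hx.
  - exists 0. intros n. simpl in hx. subst x. rewrite iter_one, len_one; auto.
  - rewrite pn_succ_r in hx. destruct (IH _ hx) as [C hC].
    exists (len x + C). intros n. induction n as [|n IHn].
    + simpl. rewrite Nat.pow_1_l. lia.
    + rewrite Nat.iter_succ_r, (f_ps f x), iter_hom by auto.
      eapply Nat.le_trans; [apply len_mul|].
      specialize (hC n).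
      assert (hp : (n + 1) ^ R <= (S n + 1) ^ R) by (apply Nat.pow_le_mono_l; lia).
      rewrite !Nat.pow_succ_r'.
      rewrite Nat.pow_succ_r' in IHn.
      set (a := (n + 1) ^ R) in *. set (b := (S n + 1) ^ R) in *.
      set (K := len x + C) in *.
      assert (h3 : K * ((S n + 1) * a) <= K * ((S n + 1) * b)) by (apply Nat.mul_le_mono_l, Nat.mul_le_mono_l; auto).
      assert (h4 : C * a <= K * a) by (apply Nat.mul_le_mono_r; unfold K; lia).
      assert (h5 : K * ((S n + 1) * a) = K * ((n + 1) * a) + K * a) by ring.
      lia.
Qed.
End Len.

End Grp.

Lemma iter_mul_add {A} (g : A -> A) p q r x :
  Nat.iter (p * q + r) g x = Nat.iter q (Nat.iter p g) (Nat.iter r g x).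
Proof.
  induction q.
  - rewrite Nat.mul_0_r. reflexivity.
  - rewrite Nat.mul_succ_r. replace (p * q + p + r)%nat with (p + (p * q + r))%nat by lia.
    rewrite Nat.iter_add, IHq. reflexivity.
Qed.

Lemma unif_bound (P : nat -> nat -> Prop) :
  (forall r C C', (C <= C')%nat -> P r C -> P r C') -> (forall r, exists C, P r C) ->
  forall p, exists C, forall r, (r < p)%nat -> P r C.
Proof.
  intros hm h p. induction p as [|p [C hC]].
  - exists 0%nat. intros; lia.
  - destruct (h p) as [C' hC']. exists (C + C')%nat. intros r hr.
    destruct (Nat.eq_dec r p) as [->|hne].
    + apply (hm _ C'); auto; lia.
    + apply (hm _ C); [lia|]. apply hC. lia.
Qed.

Lemma poly_bound
  (N : Type) (mul : N -> N -> N) (inv : N -> N) (one : N)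
  (HN : is_group mul inv one)
  (Sg : list N) (HS : generates mul inv one Sg)
  (Hnil : nilpotent mul inv one)
  (phi : N -> N) (Hphi : is_automorphism mul phi)
  (Hunip : H1Q_unipotent mul inv one phi)
  (len : N -> nat) (Hlen : forall g, is_word_length mul inv one Sg g (len g)) :
  forall s, exists C D, forall n, (len (Nat.iter n phi s) <= C * (n + 1) ^ D)%nat.
Proof.
  destruct Hphi as [Hp [Hinj Hsur]].
  destruct Hunip as [k hk].
  assert (hk' : forall x, exists m, (0 < m)%nat /\ L N mul inv one 1 (gp N mul one (pn N mul inv phi k x) m)).
  { exact hk. }
  destruct (exact_unip N mul inv one HN phi Hp Hinj Hsur Sg HS k hk') as [p [hp hex]].
  assert (Hip : forall x y, it N phi p (mul x y) = mul (it N phi p x) (it N phi p y)).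
  { intros. apply it_hom; auto. }
  destruct Hnil as [c hc].
  destruct (unip_chain N mul inv one HN (it N phi p) Hip (S k) hex c) as [R hR].
  intros s.
  assert (hr : forall r, exists C, forall q, (len (Nat.iter q (it N phi p) (Nat.iter r phi s)) <= C * (q + 1) ^ R)%nat).
  { intros r. apply (pg N mul inv one HN Sg len Hlen (it N phi p) Hip R). apply hc. apply hR. }
  destruct (unif_bound (fun r C => forall q, (len (Nat.iter q (it N phi p) (Nat.iter r phi s)) <= C * (q + 1) ^ R)%nat))
    with (p := p) as [C hC].
  - intros r C0 C1 hle h q. eapply Nat.le_trans; [apply h|]. apply Nat.mul_le_mono_r; auto.
  - exact hr.
  - exists C, R. intros n.
    rewrite (Nat.div_mod_eq n p). rewrite iter_mul_add.
    eapply Nat.le_trans; [apply hC; apply Nat.mod_upper_bound; lia|].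
    apply Nat.mul_le_mono_l. apply Nat.pow_le_mono_l.
    rewrite <- (Nat.div_mod_eq n p). assert (n / p <= n)%nat by (apply Nat.div_le_upper_bound; nia). lia.
Qed.


Open Scope R_scope.

Lemma lim_lnn : is_lim_seq (fun n => ln (INR (S n)) / INR (S n)) 0.
Proof.
  apply (is_lim_comp_seq (fun y => ln y / y) (fun n => INR (S n)) p_infty 0).
  - apply is_lim_div_ln_p.
  - exists 0%nat. intros n _. discriminate.
  - apply (is_lim_seq_incr_1 INR p_infty). apply is_lim_seq_INR.
Qed.

Lemma lim_invn : is_lim_seq (fun n => / INR n) 0.
Proof.
  assert (h := is_lim_seq_inv INR p_infty is_lim_seq_INR).
  simpl in h. apply h. discriminate.
Qed.

Lemma real_part (a : nat -> nat) (C D : nat) :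
  (forall n, (1 <= a n)%nat) -> (forall n, (a n <= C * (n + 1) ^ D)%nat) ->
  Un_cv (fun n => Rpower (INR (a n)) (/ INR n)) 1.
Proof.
  intros h1 h2.
  assert (hC : 1 <= INR C).
  { specialize (h1 0%nat). specialize (h2 0%nat). simpl in h2. rewrite Nat.pow_1_l in h2.
    apply (le_INR 1). lia. }
  set (v := fun n => ln (INR (a n)) / INR n).
  assert (hv : is_lim_seq v 0).
  { set (w := fun n => ln (INR C) * / INR n + (2 * INR D) * (ln (INR (S n)) / INR (S n))).
    apply is_lim_seq_le_le_loc with (u := fun _ => 0) (w := w).
    - exists 1%nat. intros n hn. unfold v, w.
      assert (hn' : 1 <= INR n) by (apply (le_INR 1); lia).
      assert (ha : 1 <= INR (a n)) by (apply (le_INR 1); apply h1).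
      assert (hln0 : 0 <= ln (INR (a n))).
      { rewrite <- ln_1. destruct (Rle_lt_or_eq_dec _ _ ha) as [h|h].
        - left. apply ln_increasing; lra.
        - rewrite h. lra. }
      assert (hS : 1 <= INR (S n)) by (apply (le_INR 1); lia).
      assert (hlnS : 0 <= ln (INR (S n))).
      { rewrite <- ln_1. destruct (Rle_lt_or_eq_dec _ _ hS) as [h|h].
        - left. apply ln_increasing; lra.
        - rewrite h. lra. }
      assert (hlnC : 0 <= ln (INR C)).
      { rewrite <- ln_1. destruct (Rle_lt_or_eq_dec _ _ hC) as [h|h].
        - left. apply ln_increasing; lra.
        - rewrite h. lra. }
      assert (hb : ln (INR (a n)) <= ln (INR C) + INR D * ln (INR (S n))).
      { assert (e : INR (C * (n + 1) ^ D) = INR C * INR (S n) ^ D).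
        { rewrite mult_INR, pow_INR. f_equal. f_equal. f_equal. lia. }
        rewrite <- ln_pow by lra. rewrite <- ln_mult by (try apply pow_lt; lra).
        rewrite <- e. destruct (Rle_lt_or_eq_dec (INR (a n)) (INR (C * (n + 1) ^ D))) as [h|h].
        - apply le_INR. apply h2.
        - left. apply ln_increasing; lra.
        - rewrite h. lra. }
      split.
      + unfold Rdiv. apply Rmult_le_pos; auto. left. apply Rinv_0_lt_compat. lra.
      + unfold Rdiv. rewrite S_INR in *.
        apply Rle_trans with ((ln (INR C) + INR D * ln (INR n + 1)) * / INR n).
        * apply Rmult_le_compat_r; auto. left; apply Rinv_0_lt_compat; lra.
        * rewrite Rmult_plus_distr_r. apply Rplus_le_compat_l.
          assert (hD : 0 <= INR D) by apply pos_INR.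
          assert (e1 : INR D * ln (INR n + 1) * / INR n = INR D * ln (INR n + 1) * (/ INR n)) by reflexivity.
          assert (hinv : / INR n <= 2 * / (INR n + 1)).
          { apply (Rmult_le_reg_l (INR n * (INR n + 1))); [nra|].
            field_simplify; try lra. }
          apply Rle_trans with (INR D * ln (INR n + 1) * (2 * / (INR n + 1))).
          -- apply Rmult_le_compat_l; auto. apply Rmult_le_pos; auto.
          -- lra.
    - apply is_lim_seq_const.
    - replace (Finite 0) with (Finite (ln (INR C) * 0 + (2 * INR D) * 0)) by (f_equal; ring).
      apply is_lim_seq_plus'.
      + apply (is_lim_seq_scal_l _ (ln (INR C)) 0). apply lim_invn.
      + apply (is_lim_seq_scal_l _ (2 * INR D) 0). apply lim_lnn. }
  apply is_lim_seq_Reals.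
  apply is_lim_seq_ext with (u := fun n => exp (v n)).
  - intros n. unfold Rpower, v, Rdiv. f_equal. ring.
  - rewrite <- exp_0. apply is_lim_seq_continuous; auto.
    apply derivable_continuous_pt. apply derivable_pt_exp.
Qed.



Theorem corollary1p5
  (N : Type) (mul : N -> N -> N) (inv : N -> N) (one : N)
  (HN : is_group mul inv one)
  (S : list N) (HS : generates mul inv one S)
  (Hnil : nilpotent mul inv one)
  (Htf : torsion_free mul one)
  (phi : N -> N) (Hphi : is_automorphism mul phi)
  (Hunip : H1Q_unipotent mul inv one phi)
  (len : N -> nat) (Hlen : forall g, is_word_length mul inv one S g (len g)) :
  forall s, In s S -> s <> one ->
    Un_cv (fun n => Rpower (INR (len (Nat.iter n phi s))) (/ INR n)) 1.
Proof.
  intros s _ hs.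
  destruct (poly_bound N mul inv one HN S HS Hnil phi Hphi Hunip len Hlen s) as [C [D hCD]].
  apply (real_part (fun n => len (Nat.iter n phi s)) C D); auto.
  intros n. apply (len_pos N mul inv one S len Hlen).
  destruct Hphi as [Hp [Hinj _]].
  induction n; auto. simpl. intros e. apply IHn. apply Hinj. rewrite e.
  symmetry. apply (f1 N mul inv one HN phi Hp).
Qed.
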